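(* Let $G$ be an ordered graph with $|V(G)|\le n$, let $h\ge 1$ be a real number, and let $e\in E(G)$ satisfy $\mathrm{h}_G(e)\ge 21h\log n$. Then there is a subgraph $H\subseteq G$ with average degree $\overline{d}(H)\ge h$ such that for each $f\in E(H)$ there is an increasing trail $T$ in $G$ with the following properties: (1) $T$ starts with $e$ and ends with $f$; (2) $T$ has length at most $2+\log n$; (3) $\mathrm{h}_G(g)\ge \mathrm{h}_G(e)-7h(\log n+2)$ for every edge $g\in E(T)$.
   Context: An ordered graph is a finite simple graph $G$ equipped with a total order $\le_G$ on $E(G)$ and a total order $\le^V_G$ on $V(G)$. Let $\mathbb N=\{1,2,\dots\}$. Define $\preceq_{\mathrm{lex}}$ on $\mathbb N\times V(G)$ by $(i,v)\preceq_{\mathrm{lex}}(i',v')$ iff $i<i'$, or $i=i'$ and $v\le^V_G v'$. The height table $\mathrm{HT}(G)$ is a partially filled array indexed by $\mathbb N\times V(G)$, built by going through all $(i,v)$ in $\preceq_{\mathrm{lex}}$-increasing order and setting the entry at $(i,v)$ to be the $\le_G$-largest edge containing $v$ not yet entered into the table (blank if none remain). Every edge is entered exactly once; $\mathrm{h}_G(e)$ denotes the row of $\mathrm{HT}(G)$ containing $e$. An increasing trail is a walk with a specified direction that does not repeat edges (vertices may repeat) and whose consecutive edges are $\le_G$-increasing; its length is its number of edges. $\overline{d}(H)=2|E(H)|/|V(H)|$. Logarithms are base 2. *)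

(* Defs.v *)
From Stdlib Require Import Reals.
From mathcomp Require Import all_boot.

Set Implicit Arguments.
Unset Strict Implicit.
Unset Printing Implicit Defensive.

(* An ordered graph on the vertex set 'I_N (vertex order = natural order of 'I_N).
   Edges are 2-element subsets of 'I_N; the edge set is Eset : {set {set 'I_N}}.
   The total edge order is given by a rank w : {set 'I_N} -> nat, injective on Eset:
   e <=_G f  iff  w e <= w f. *)

Section HeightTable.
Variable N : nat.
Variable w : {set 'I_N} -> nat.

Definition ht_cell (i : nat) (st : {set {set 'I_N}} * ({set 'I_N} -> nat)) (v : 'I_N)
  : {set {set 'I_N}} * ({set 'I_N} -> nat) :=
  let: (R, hf) := st in
  match [pick e in R | (v \in e) && [forall f in R, (v \in f) ==> (w f <= w e)]] with
  | Some e => (R :\ e, fun f => if f == e then i else hf f)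
  | None => st
  end.

Definition ht_row (i : nat) st := foldl (ht_cell i) st (enum 'I_N).

Fixpoint ht_rows (i k : nat) st :=
  match k with
  | 0 => st
  | k'.+1 => ht_rows i.+1 k' (ht_row i st)
  end.

(* h_G(e): the row of HT(G) containing e.  #|Eset| rows suffice to enter every edge
   (each row with a remaining edge enters at least one edge); later rows are blank. *)
Definition height (Eset : {set {set 'I_N}}) : {set 'I_N} -> nat :=
  (ht_rows 1 #|Eset| (Eset, fun _ => 0)).2.

(* A trail given by its vertex sequence x0 :: p; its edges in order. *)
Definition trail_edges (x0 : 'I_N) (p : seq 'I_N) : seq {set 'I_N} :=
  pairmap (fun a b => [set a; b]) x0 p.

Definition increasing_trail (Eset : {set {set 'I_N}}) (x0 : 'I_N) (p : seq 'I_N) : bool :=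
  let es := trail_edges x0 p in
  [&& all (fun g => g \in Eset) es, uniq es & sorted (fun a b => w a < w b) es].

End HeightTable.

Definition log2 (x : R) : R := Rdiv (ln x) (ln (IZR 2)).

(* Main.v *)
Require Import Defs.
From Stdlib Require Import Reals Lra ClassicalEpsilon.
From mathcomp Require Import all_boot zify.
Set Implicit Arguments.
Unset Strict Implicit.
Unset Printing Implicit Defensive.

Section HT.
Variables (N : nat) (Eset : {set {set 'I_N}}) (w : {set 'I_N} -> nat).
Local Notation state := ({set {set 'I_N}} * ({set 'I_N} -> nat))%type.

Definition Wt (j : nat) (v : 'I_N) (f : {set 'I_N}) (st : state) : Prop :=
  exists g, [/\ g \in Eset, g \notin st.1, v \in g, st.2 g = j & w f <= w g].

Definition Inv (i : nat) (s : seq 'I_N) (st : state) : Prop :=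
  [/\ st.1 \subset Eset,
      forall g, g \in st.1 -> st.2 g = 0,
      forall g, g \in Eset -> g \notin st.1 -> 0 < st.2 g <= i,
      forall f v j, f \in Eset -> v \in f -> 0 < j < i -> (f \in st.1) || (j < st.2 f) -> Wt j v f st &
      forall f v, f \in Eset -> v \in f -> v \in s -> f \in st.1 -> Wt i v f st].

Lemma Wt_stable j u f R hf g i : Wt j u f (R, hf) -> g \in R ->
  Wt j u f (R :\ g, fun f => if f == g then i else hf f).
Proof.
move=> [g0 [g0E g0R ug0 hg0 wg0]] gR; exists g0; split => //=.
- by rewrite in_setD1 (negbTE g0R) andbF.
- by have -> : (g0 == g) = false by apply/eqP => E; rewrite E gR in g0R.
Qed.

Lemma Inv_cell i s st v : 0 < i -> Inv i s st -> Inv i (rcons s v) (ht_cell w i st v).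
Proof.
case: st => R hf i0 [/= RE R0 RC RD RE'].
rewrite /ht_cell; case: pickP => [g /andP[gR /andP[vg /forall_inP gmax]] | nop].
- split => /=.
  + by apply: subset_trans (subD1set _ _) RE.
  + move=> f; rewrite in_setD1 => /andP[/negbTE -> fR]; exact: R0.
  + move=> f fE; rewrite in_setD1 negb_and negbK; case: eqP => [-> _|fg /= fR].
      by rewrite i0 leqnn.
    exact: RC.
  + move=> f u j fE uf ji H; apply: Wt_stable => //; apply: RD => //.
    move: H; rewrite in_setD1; case: eqP => [->|_] /=; first by rewrite gR.
    by [].
  + move=> f u fE uf; rewrite mem_rcons in_cons => /orP[/eqP Euv|us].
      subst u; rewrite in_setD1 => /andP[fg fR]; exists g; split => //=.
      * by apply: (subsetP RE).
      * by rewrite in_setD1 eqxx.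
      * by rewrite eqxx.
      * by move/implyP: (gmax f fR); apply.
    rewrite in_setD1 => /andP[fg fR]; apply: Wt_stable => //; exact: RE'.
- split => //= f u fE uf; rewrite mem_rcons in_cons => /orP[/eqP Euv|us] fR; last exact: RE'.
  exfalso; subst u.
  pose P := fun g => (g \in R) && (v \in g).
  have fA : P f by rewrite /P fR uf.
  case: (arg_maxnP w fA) => g /andP[gR vg] gmax.
  move: (nop g) => /=; rewrite gR vg /=; move/negbT/negP; apply.
  apply/forall_inP => f' f'R; apply/implyP => vf'; apply: gmax; by rewrite /P f'R vf'.
Qed.

Lemma Inv_fold i s s0 st : 0 < i -> Inv i s0 st -> Inv i (s0 ++ s) (foldl (ht_cell w i) st s).
Proof.
move=> i0; elim: s s0 st => [|v s IH] s0 st H /=; first by rewrite cats0.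
rewrite -cat_rcons; apply: IH; exact: Inv_cell.
Qed.

Lemma Inv_row i st : 0 < i -> Inv i [::] st -> Inv i.+1 [::] (ht_row w i st).
Proof.
move=> i0 H; have := Inv_fold (enum 'I_N) i0 H; rewrite /= -/(ht_row w i st).
case: (ht_row w i st) => R hf [/= RE R0 RC RD RE']; split => //=.
- move=> g gE gR; case/andP: (RC g gE gR) => -> /= h; exact: leqW.
- move=> f v j fE vf /andP[j0 ji] H'; rewrite ltnS leq_eqVlt in ji.
  case/orP: ji => [/eqP Eji|ji]; last by apply: RD => //; rewrite j0.
  subst j; have fR : f \in R.
    apply: contraT => fR; move: H'; rewrite (negbTE fR) /=.
    by case/andP: (RC f fE fR) => _ /leq_ltn_trans H1 /H1; rewrite ltnn.
  by apply: RE' => //; rewrite mem_enum.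
Qed.

Lemma Inv_rows k i st : 0 < i -> Inv i [::] st -> Inv (i + k) [::] (ht_rows w i k st).
Proof.
elim: k i st => [|k IH] i st i0 H /=; first by rewrite addn0.
rewrite addnS -addSn; apply: IH => //; exact: Inv_row.
Qed.

Lemma Inv_init : Inv 1 [::] (Eset, fun _ => 0).
Proof.
split => //=.
- move=> g gE; by rewrite gE.
- by move=> f v j _ _ /andP[/leq_trans H /H].
Qed.

Lemma height_key f v j : f \in Eset -> v \in f -> 0 < j < height w Eset f ->
  exists g, [/\ g \in Eset, v \in g, height w Eset g = j & w f <= w g].
Proof.
move=> fE vf /andP[j0 jh].
have := Inv_rows #|Eset| (isT : 0 < 1) Inv_init.
rewrite /height in jh *.
case: (ht_rows w 1 #|Eset| (Eset, fun=> 0)) jh => R hf /= jh [/= RE R0 RC RD RE'].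
have fR : f \notin R by apply: contraTN jh => /R0 ->.
have [g [gE gR vg hg wg]] : Wt j v f (R, hf).
  apply: RD => //; last by rewrite jh orbT.
  rewrite j0 /=; case/andP: (RC f fE fR) => _; exact: leq_trans.
by exists g.
Qed.
End HT.


Definition decb (P : Prop) : bool := if excluded_middle_informative P then true else false.
Lemma decbP P : reflect P (decb P).
Proof. rewrite /decb; case: excluded_middle_informative => H; by constructor. Qed.

Lemma te_rcons N (x0 : 'I_N) p u :
  trail_edges x0 (rcons p u) = rcons (trail_edges x0 p) [set last x0 p; u].
Proof. by elim: p x0 => [|y p IH] x0 //=; rewrite IH. Qed.

Lemma two_elem N (g : {set 'I_N}) v : #|g| = 2 -> v \in g -> exists u, g = [set v; u].
Proof.
move/eqP/cards2P => [x [y [_ ->]]]; rewrite !inE => /orP[/eqP->|/eqP->].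
  by exists y.
by exists x; rewrite setUC.
Qed.

Section Main.
Variables (N : nat) (Eset : {set {set 'I_N}}) (w : {set 'I_N} -> nat) (e : {set 'I_N}).
Hypotheses (H2 : forall f, f \in Eset -> #|f| = 2) (Hw : {in Eset &, injective w})
  (He : e \in Eset).
Local Notation ht := (height w Eset).
Local Notation te := (@trail_edges N).

Lemma inc_of x0 p : all (fun g => g \in Eset) (te x0 p) ->
  sorted (fun a b => w a < w b) (te x0 p) -> increasing_trail w Eset x0 p.
Proof.
rewrite /increasing_trail => -> s; rewrite s andbT; apply: sorted_uniq s.
  by move=> b a c; exact: ltn_trans.
by move=> a; exact: ltnn.
Qed.

Definition good (M T : nat) x0 p : Prop :=
  [/\ increasing_trail w Eset x0 p && (p != [::]), head set0 (te x0 p) = e,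
      size p <= M & forall g, g \in te x0 p -> T <= ht g].

Lemma good_ext M T T' x0 p g : good M T x0 p -> g \in Eset -> last x0 p \in g ->
  w (last set0 (te x0 p)) < w g -> T' <= T -> T' <= ht g ->
  exists u, good M.+1 T' x0 (rcons p u) /\ last set0 (te x0 (rcons p u)) = g.
Proof.
move=> [/andP[/and3P[allE _ srt] pn] hd sz hts] gE vg wg TT Tg.
have [u gdef] := two_elem (H2 gE) vg.
exists u; rewrite /good te_rcons last_rcons -gdef; split => //; split.
- apply/andP; split; last by rewrite -size_eq0 size_rcons.
  apply: inc_of.
    by rewrite te_rcons -gdef all_rcons gE.
  rewrite te_rcons -gdef; move: srt wg; case: (te x0 p) => [|a s] //= srt wg.
  by rewrite rcons_path srt.
- by case: p pn {sz hts srt allE wg vg gdef} hd.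
- by rewrite size_rcons.
- move=> g'; rewrite mem_rcons in_cons => /orP[/eqP->//|/hts]; exact: leq_trans.
Qed.

Lemma good_prefix M T x0 p u : good M T x0 (rcons p u) -> p != [::] -> good M T x0 p.
Proof.
rewrite /good /increasing_trail te_rcons => -[/andP[/and3P[allE _ srt] _] hd sz hts] pn; split.
- rewrite pn andbT; apply: inc_of.
    by move: allE; rewrite all_rcons => /andP[].
  move: srt; case: (te x0 p) => [|a s] //=.
  by rewrite rcons_path => /andP[].
- by move: hd; case: p pn {allE srt sz hts}.
- by apply: leq_trans sz; rewrite size_rcons.
- by move=> g gs; apply: hts; rewrite mem_rcons in_cons gs orbT.
Qed.

Lemma good_endpoint M T x0 p v : good M T x0 p -> T <= ht e ->
  v \in last set0 (te x0 p) -> exists x1 p1, good M T x1 p1 /\ last x1 p1 = v.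
Proof.
move=> G Te; have pn : p != [::] by case: G => /andP[].
move: G; case/lastP: p pn => [//|p' u] _ G.
rewrite te_rcons last_rcons !inE => /orP[/eqP->|/eqP->]; last first.
  by exists x0, (rcons p' u); rewrite last_rcons.
case: (boolP (p' == [::])) => [/eqP E|pn].
  subst p'; exists u, [:: x0]; split => //.
  case: G => /andP[/and3P[allE _ _] _] /= hd sz _.
  have ee : [set u; x0] = e by rewrite setUC.
  split => //=.
  - by rewrite andbT /increasing_trail /= ee He /=.
  - by move=> g; rewrite inE => /eqP->; rewrite ee.
by exists x0, p'; split => //; exact: good_prefix G pn.
Qed.

Definition RVset M T : {set 'I_N} := [set v | decb (exists x0 p, good M T x0 p /\ last x0 p = v)].
Definition Eedges M T : {set {set 'I_N}} :=
  [set g | decb (exists x0 p, good M T x0 p /\ last set0 (te x0 p) = g)].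

End Main.

Section Count.
Variables (N : nat) (Eset : {set {set 'I_N}}) (w : {set 'I_N} -> nat) (e : {set 'I_N}).
Hypotheses (H2 : forall f, f \in Eset -> #|f| = 2) (Hw : {in Eset &, injective w})
  (He : e \in Eset).
Local Notation ht := (height w Eset).
Local Notation te := (@trail_edges N).
Local Notation good := (good Eset w e).
Local Notation RVset := (RVset Eset w e).
Local Notation Eedges := (Eedges Eset w e).

Lemma lastE_in M T x0 p : good M T x0 p -> last set0 (te x0 p) \in Eset.
Proof.
case=> /andP[/and3P[allE _ _] pn] _ _ _; move: allE pn.
case/lastP: p => [//|p u]; rewrite te_rcons last_rcons => /allP allE _.
by apply: allE; rewrite mem_rcons mem_head.
Qed.

Lemma deg_bound M T T' c v : v \in RVset M T -> T' + c <= T -> 0 < T' ->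
  c <= #|[set g in Eedges M.+1 T' | v \in g]|.
Proof.
rewrite inE => /decbP [x0 [p [G lv]]] Tc T0.
have pn : p != [::] by case: G => /andP[].
move: G lv; case/lastP: p pn => [//|p' u] _ G; rewrite last_rcons => uv; subst u.
set f := [set last x0 p'; v].
have lastf : last set0 (te x0 (rcons p' v)) = f by rewrite te_rcons last_rcons.
have fte : f \in te x0 (rcons p' v) by rewrite te_rcons mem_rcons mem_head.
have fE : f \in Eset by rewrite -lastf; exact: lastE_in G.
have hf : T <= ht f by case: G => _ _ _; apply.
have vf : v \in f by rewrite !inE eqxx orbT.
have TT : T' <= T by apply: leq_trans Tc; exact: leq_addr.
have ex : forall j : 'I_c, exists g,
    (g \in [set g in Eedges M.+1 T' | v \in g]) && (ht g == T' + j).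
  move=> j; have jr : 0 < T' + j < ht f.
    apply/andP; split; first by rewrite (leq_trans T0) ?leq_addr.
    apply: leq_trans hf; apply: leq_trans Tc; by rewrite ltn_add2l ltn_ord.
  have [g [gE vg hg wg]] := @height_key _ _ w f v (T' + j) fE vf jr.
  have gf : g != f.
    apply/eqP => gf; move: hf; rewrite -gf hg => /(leq_trans Tc).
    by rewrite leq_add2l leqNgt ltn_ord.
  have wlt : w f < w g.
    rewrite ltn_neqAle wg andbT; apply/eqP => E; move/eqP: gf; apply.
    by symmetry; exact: Hw fE gE E.
  have l1 : last x0 (rcons p' v) \in g by rewrite last_rcons.
  have l2 : w (last set0 (te x0 (rcons p' v))) < w g by rewrite lastf.
  have l3 : T' <= ht g by rewrite hg leq_addr.
  have [u [Gu lu]] := good_ext H2 G gE l1 l2 TT l3.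
  exists g; rewrite hg eqxx andbT !inE vg andbT; apply/decbP.
  by exists x0, (rcons (rcons p' v) u).
have [F HF] := fin_all_exists ex.
have inj : injective F.
  move=> j1 j2 E; move/andP: (HF j1) => [_ /eqP h1]; move/andP: (HF j2) => [_ /eqP h2].
  by apply: val_inj; apply/eqP; rewrite -(eqn_add2l T') -h1 -h2 E.
have <- : #|[set F j | j : 'I_c]| = c by rewrite card_imset // card_ord.
by apply: subset_leq_card; apply/subsetP => g /imsetP [j _ ->]; case/andP: (HF j).
Qed.

Lemma Eedges_sub M T : Eedges M T \subset Eset.
Proof.
apply/subsetP => g; rewrite inE => /decbP [x0 [p [G <-]]]; exact: lastE_in G.
Qed.

Lemma edge_count (R : {set 'I_N}) (E : {set {set 'I_N}}) : E \subset Eset ->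
  \sum_(v in R) #|[set g in E | v \in g]| <= 2 * #|E|.
Proof.
move=> sub.
have cs : forall v, #|[set g in E | v \in g]| = \sum_(g in E) (v \in g : nat).
  move=> v; rewrite -sum1_card big_mkcond /= [RHS]big_mkcond /=.
  by apply: eq_bigr => g _; rewrite !inE; case: (g \in E); case: (v \in g).
under eq_bigr do rewrite cs.
apply: leq_trans (_ : \sum_(v : 'I_N) \sum_(g in E) (v \in g : nat) <= _).
  by rewrite [X in _ <= X](bigID (mem R)) /= leq_addr.
rewrite exchange_big /= mulnC -sum_nat_const; apply: leq_sum => g gE.
have -> : \sum_(v : 'I_N) (v \in g : nat) = #|g|.
  by rewrite -sum1_card [RHS]big_mkcond; apply: eq_bigr => v _; case: (v \in g).
by rewrite H2 // (subsetP sub).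
Qed.

Lemma step_bound c m : c * m.+1 < ht e ->
  c * #|RVset m.+1 (ht e - c * m)| <= 2 * #|Eedges m.+2 (ht e - c * m.+1)|.
Proof.
move=> ck.
apply: leq_trans (edge_count (RVset m.+1 (ht e - c * m)) (Eedges_sub _ _)).
rewrite mulnC -sum_nat_const; apply: leq_sum => v vR; apply: deg_bound vR _ _.
  rewrite mulnS in ck *; lia.
rewrite mulnS in ck *; lia.
Qed.

Lemma V_sub M T : T <= ht e -> \bigcup_(g in Eedges M T) g \subset RVset M T.
Proof.
move=> Te; apply/subsetP => v /bigcupP [g]; rewrite inE => /decbP [x0 [p [G <-]]] vg.
have [x1 [p1 [G1 l1]]] := good_endpoint He G Te vg.
by rewrite inE; apply/decbP; exists x1, p1.
Qed.

End Count.

Local Open Scope R_scope.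

Lemma ln_le' (x y : R) : 0 < x -> x <= y -> ln x <= ln y.
Proof.
move=> x0 xy; case: (Rle_lt_or_eq_dec _ _ xy) => [lt|->]; last by apply: Rle_refl.
by apply: Rlt_le; apply: ln_increasing.
Qed.

Lemma ln2_pos : 0 < ln 2.
Proof. have := ln_lt_2; lra. Qed.

Lemma expn_pow m : (2 ^ m)%N = Nat.pow 2 m.
Proof. by elim: m => //= m IH; rewrite expnS IH. Qed.

Lemma log_bound m n : (0 < n)%N -> (2 ^ m <= n)%N -> INR m <= log2 (INR n).
Proof.
move=> n0 H; have l2 := ln2_pos.
have H' : INR (2 ^ m) <= INR n by apply: le_INR; apply/leP.
rewrite expn_pow pow_INR in H'.
have H3 := ln_le' (pow_lt _ m (ltac:(simpl; lra) : 0 < INR 2)) H'.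
rewrite ln_pow in H3; last by simpl; lra.
rewrite /log2; apply Rmult_le_reg_r with (ln 2); first lra.
rewrite /Rdiv Rmult_assoc Rinv_l; last lra.
have e2 : INR 2 = 2 by simpl; lra.
rewrite e2 in H3; lra.
Qed.

Lemma exists_c (h : R) : 1 <= h -> exists c : nat, 2 * h <= INR c /\ INR c <= 2 * h + 1.
Proof.
move=> h1; have [a1 a2] := archimed (2 * h).
have z0 : (0 <= up (2 * h))%Z by apply: le_IZR; lra.
exists (Z.to_nat (up (2 * h))); rewrite INR_IZR_INZ Znat.Z2Nat.id //; lra.
Qed.

Unset Implicit Arguments.

Theorem lemma4p2 (N n : nat) (Eset : {set {set 'I_N}}) (w : {set 'I_N} -> nat)
  (h : R) (e : {set 'I_N}) :
  (forall f, f \in Eset -> #|f| = 2%N) ->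
  {in Eset &, injective w} ->
  (N <= n)%N ->
  1 <= h ->
  e \in Eset ->
  INR (height w Eset e) >= 21 * h * log2 (INR n) ->
  exists (VH : {set 'I_N}) (EH : {set {set 'I_N}}),
    [/\ EH \subset Eset,
        (forall f, f \in EH -> f \subset VH),
        VH != set0,
        INR (2 * #|EH|)%N / INR #|VH| >= h &
        forall f, f \in EH ->
          exists (x0 : 'I_N) (p : seq 'I_N),
            [/\ increasing_trail w Eset x0 p && (p != [::]),
                head set0 (trail_edges x0 p) = e,
                last set0 (trail_edges x0 p) = f,
                INR (size p) <= 2 + log2 (INR n) &
                forall g, g \in trail_edges x0 p ->
                  INR (height w Eset g) >= INR (height w Eset e) - 7 * h * (log2 (INR n) + 2)]].
Proof.
move=> H2 Hw Nn h1 He hk.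
set k := height w Eset e in hk *.
set L := log2 (INR n) in hk *.
have N2 : (2 <= N)%N.
  by rewrite -(H2 e He) -[X in (_ <= X)%N]card_ord; exact: max_card.
have n0 : (0 < n)%N by apply: leq_trans Nn; apply: leq_trans N2.
have L1 : 1 <= L.
  have := @log_bound 1 n n0 (leq_trans N2 Nn); rewrite /L /=; lra.
have [c [c1 c2]] := exists_c h1.
pose m0 := trunc_log 2 n.
have m0a : (2 ^ m0 <= n)%N by apply: trunc_logP.
have m0b : (n < 2 ^ m0.+1)%N by apply: trunc_log_ltn.
have m0L : INR m0 <= L by apply: log_bound.
have cb : forall m, (m <= m0)%N -> INR (c * m.+1) <= 3 * h * (L + 1).
  move=> m mm; rewrite -multE mult_INR.
  have : INR m.+1 <= L + 1.
    rewrite S_INR; have := le_INR _ _ (elimT leP mm); lra.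
  have : 0 <= INR m.+1 by apply: pos_INR.
  move=> *; nra.
have ck : forall m, (m <= m0)%N -> (c * m.+1 < k)%N.
  move=> m mm; apply/ltP; apply: INR_lt; have := cb m mm; nra.
pose Rm m := RVset Eset w e m.+1 (k - c * m).
pose Em m := Eedges Eset w e m.+2 (k - c * m.+1).
pose Vm m := \bigcup_(g in Em m) g.
have Vnz : forall m, Em m != set0 -> (0 < #|Vm m|)%N.
  move=> m /set0Pn [g gE]; rewrite card_gt0.
  have gE' : g \in Eset by apply: (subsetP (Eedges_sub _ _ _ _ _)) gE.
  have : (0 < #|g|)%N by rewrite H2.
  rewrite card_gt0 => /set0Pn [x xg]; apply/set0Pn; exists x.
  by apply/bigcupP; exists g.
pose Succ m := [/\ (m <= m0)%N, Em m != set0 & h <= INR (2 * #|Em m|) / INR #|Vm m|].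
have claim : forall m, (m <= m0.+1)%N -> (exists m', (m' < m)%N /\ Succ m') \/ (2 ^ m <= #|Rm m|)%N.
  elim=> [|m IH] mm.
    right; rewrite expn0 card_gt0; apply/set0Pn.
    have /cards2P [x0 [x1 [_ edef]]] : #|e| == 2%N by rewrite H2.
    exists x1; rewrite /Rm inE; apply/decbP; exists x0, [:: x1]; split => //.
    split => //=.
    - by rewrite andbT /increasing_trail /= -edef He.
    - by move=> g; rewrite inE => /eqP->; rewrite -edef muln0 subn0.
  have mm' : (m <= m0)%N by [].
  case: (IH (ltnW mm)) => [[m' [m'm Sm']]|hR].
    by left; exists m'; split => //; apply: ltnW.
  have sb : (c * #|Rm m| <= 2 * #|Em m|)%N := step_bound H2 Hw He (ck m mm').
  have Vs : Vm m \subset Rm m.+1 by apply: V_sub => //; apply: leq_subr.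
  have Enz : Em m != set0.
    apply/negP => /eqP E0; move: sb; rewrite E0 cards0 muln0 leqn0 muln_eq0.
    case/orP => /eqP H0.
      by move: c1; rewrite H0 /=; lra.
    by move: hR; rewrite /Rm H0 leqn0 expn_eq0.
  case: (Rle_lt_dec h (INR (2 * #|Em m|) / INR #|Vm m|)) => [dense|sparse].
    by left; exists m; split => //.
  right.
  have V0 : 0 < INR #|Vm m| by apply: lt_0_INR; apply/ltP; apply: Vnz.
  have sp : INR (2 * #|Em m|) < h * INR #|Vm m|.
    apply (Rmult_lt_reg_r (/ INR #|Vm m|)); first by apply: Rinv_0_lt_compat.
    rewrite Rmult_assoc Rinv_r; last lra.
    by rewrite Rmult_1_r.
  have sb' : INR c * INR #|Rm m| <= INR (2 * #|Em m|).
    by rewrite -mult_INR multE; apply: le_INR; apply/leP.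
  have R0 : 0 <= INR #|Rm m| by apply: pos_INR.
  have lt : INR (2 * #|Rm m|) < INR #|Vm m|.
    rewrite -multE mult_INR /=.
    have HA0 : 0 <= (INR c - 2 * h) * INR #|Rm m| by apply: Rmult_le_pos; lra.
    have s1 : h * ((1 + 1) * INR #|Rm m|) <= INR c * INR #|Rm m| by nra.
    have HA : h * ((1 + 1) * INR #|Rm m|) < h * INR #|Vm m|.
      apply: (Rle_lt_trans _ _ _ s1); apply: (Rle_lt_trans _ _ _ sb'); exact: sp.
    apply: (Rmult_lt_reg_l h); [lra | exact: HA].
  have lt' : (2 * #|Rm m| < #|Vm m|)%N by apply/ltP; apply: INR_lt.
  rewrite expnS; apply: leq_trans (leq_mul (leqnn 2) hR) _.
  apply: leq_trans (ltnW lt') _; exact: subset_leq_card.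
case: (claim m0.+1 (leqnn _)) => [[m [mm [_ Enz dense]]]|hR]; last first.
  exfalso; have H : (#|Rm m0.+1| <= n)%N.
    by apply: leq_trans (max_card _) _; rewrite card_ord.
  by move: (leq_ltn_trans (leq_trans hR H) m0b); rewrite ltnn.
exists (Vm m), (Em m); split.
- exact: Eedges_sub.
- by move=> f fE; apply: (bigcup_sup _ fE).
- by rewrite -card_gt0; apply: Vnz.
- by apply: Rle_ge.
move=> f; rewrite /Em inE => /decbP [x0 [p [[ip hd sz hts] lf]]].
exists x0, p; split => //.
  have : INR (size p) <= INR m.+2 by apply: le_INR; apply/leP.
  have mm' : (m <= m0)%N by [].
  rewrite !S_INR; have := le_INR _ _ (elimT leP mm'); lra.
move=> g gp; apply: Rle_ge.
have := le_INR _ _ (elimT leP (hts g gp)).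
rewrite minus_INR; last by apply/leP; apply: ltnW; apply: ck; exact: mm.
have mm' : (m <= m0)%N by [].
have := cb m mm'; nra.
Qed.
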